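(* For every $j\in\mathbb{N}$, every $n\in\mathbb{N}$ and every $M\in\mathbb{R}^{n\times n}$, $$\|\mathcal{U}(M)\|_{S_{2^j}}\le 2^{j-1}\|M\|_{S_{2^j}}.$$
   Context: For $M\in\mathbb{R}^{n\times n}$ with singular values $\sigma_1(M)\ge\dots\ge\sigma_n(M)$, the Schatten norm is $\|M\|_{S_p}:=(\sum_{m=1}^n\sigma_m(M)^p)^{1/p}$ for $1\le p<\infty$ and $\|M\|_{S_\infty}:=\sigma_1(M)$ (spectral norm). The upper triangular truncation is $\mathcal{U}(M)_{ij}:=M_{ij}$ if $i\le j$ and $0$ if $i>j$. *)

(* Defs.v *)
From HB Require Import structures.
From mathcomp Require Import all_boot all_order all_algebra.
From mathcomp Require Import all_classical all_reals all_analysis.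
Set Implicit Arguments. Unset Strict Implicit. Unset Printing Implicit Defensive.
Import Order.TTheory GRing.Theory Num.Theory.
Local Open Scope ring_scope.
Local Open Scope classical_set_scope.

Definition is_singvals (R : realType) (n : nat) (M : 'M[R]_n) (s : 'rV[R]_n) : Prop :=
  (forall i : 'I_n, 0 <= s 0 i) /\
  (forall i j : 'I_n, (i <= j)%N -> s 0 j <= s 0 i) /\
  exists U V : 'M[R]_n,
    U *m U^T = 1%:M /\ V *m V^T = 1%:M /\ M = U *m diag_mx s *m V^T.

(* The singular values sigma_1(M) >= ... >= sigma_n(M) (they exist and are unique). *)
Definition singvals (R : realType) (n : nat) (M : 'M[R]_n) : 'rV[R]_n :=
  xget 0 [set s | is_singvals M s].

Definition schatten (R : realType) (n : nat) (p : R) (M : 'M[R]_n) : R :=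
  powR (\sum_(m < n) powR (singvals M 0 m) p) p^-1.

Definition utrunc (R : realType) (n : nat) (M : 'M[R]_n) : 'M[R]_n :=
  \matrix_(i < n, j < n) (if (i <= j)%N then M i j else 0).

(* Main.v *)
Require Import Defs.
From mathcomp Require Import all_boot all_order all_algebra.
From mathcomp Require Import all_classical all_reals all_analysis.
From mathcomp Require Import ring lra.
Import Order.TTheory GRing.Theory Num.Theory.
Import numFieldNormedType.Exports.
Local Open Scope ring_scope.
Set Implicit Arguments. Unset Strict Implicit. Unset Printing Implicit Defensive.

Module PA.
Section TraceIneq.
Variable (R : rcfType) (n : nat).
Implicit Types (A B P Q X Y Z : 'M[R]_n).

Lemma trmxX A k : (A ^+ k)^T = (A^T) ^+ k.
Proof.
elim: k => [|k IH]; first by rewrite !expr0 trmx1.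
by rewrite exprS -mulmxE trmx_mul IH mulmxE -exprSr.
Qed.

Lemma expr_swap A B k : (A * B) ^+ k.+1 = A * (B * A) ^+ k * B.
Proof.
elim: k => [|k IH]; first by rewrite !expr1 expr0 mulr1.
by rewrite exprS IH [in RHS]exprS !mulrA.
Qed.

Lemma tr_swapX A B k : \tr ((A * B) ^+ k) = \tr ((B * A) ^+ k).
Proof.
case: k => [|k]; first by rewrite !expr0.
by rewrite expr_swap -!mulmxE mxtrace_mulC !mulmxE mulrA -exprS.
Qed.

Lemma tr_sq X : \tr (X^T * X) = \sum_i \sum_j X j i ^+ 2.
Proof.
rewrite /mxtrace; apply: eq_bigr => i _; rewrite -mulmxE mxE.
by apply: eq_bigr => j _; rewrite mxE expr2.
Qed.

Lemma tr_sq_ge0 X : 0 <= \tr (X^T * X).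
Proof. by rewrite tr_sq; do 2 apply: sumr_ge0 => ? _; apply: sqr_ge0. Qed.

Definition Tr (L : nat) X := \tr ((X^T * X) ^+ (2 ^ L)).

Lemma TrS L X : Tr L.+1 X = \tr ((((X^T * X)^+ (2^L))^T) * ((X^T * X)^+ (2^L))).
Proof.
rewrite /Tr trmxX trmx_mul trmxK -exprD addnn -mul2n -expnS //.
Qed.

Lemma Tr_ge0 L X : 0 <= Tr L X.
Proof. by case: L => [|L]; rewrite ?TrS ?tr_sq_ge0 // /Tr expr1 tr_sq_ge0. Qed.

Lemma Tr_tr L X : Tr L X^T = Tr L X.
Proof. by rewrite /Tr trmxK tr_swapX. Qed.

Lemma quad (a b c : R) : 0 <= a -> (forall t, 0 <= a * t ^+ 2 - 2 * b * t + c) ->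
  b ^+ 2 <= a * c.
Proof.
move=> a0 H; have [aE|an0] := eqVneq a 0.
  rewrite aE mul0r.
  have [->|bn0] := eqVneq b 0; first by rewrite expr0n.
  have := H ((c + 1) / (2 * b)).
  have e : 2 * b * ((c + 1) / (2 * b)) = c + 1 by field; rewrite ?mulf_neq0 // ?pnatr_eq0.
  idtac.
  rewrite e aE mul0r; lra.
have ap : 0 < a by rewrite lt_def an0.
have := H (b / a).
have e : a * (b / a) ^+ 2 - 2 * b * (b / a) + c = c - b ^+ 2 / a by field.
rewrite e subr_ge0 ler_pdivrMr // mulrC //.
Qed.

Lemma CS P Q : \tr (P * Q) ^+ 2 <= \tr (P^T * P) * \tr (Q^T * Q).
Proof.
apply: quad; first exact: tr_sq_ge0.
move=> t; set Z := t *: P - Q^T.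
have := tr_sq_ge0 Z.
rewrite /Z raddfB /= linearZ /= trmxK -!mulmxE mulmxBl !mulmxBr -!scalemxAl -!scalemxAr !scalerA.
rewrite !raddfB /= !mxtraceZ -trmx_mul mxtrace_tr (mxtrace_mulC Q P) (mxtrace_mulC Q Q^T).
move=> h; apply: le_trans h _; rewrite le_eqVlt; apply/orP; left; apply/eqP; ring.
Qed.

Definition Aprop L := forall P Q, \tr ((P * Q) ^+ (2 ^ L)) ^+ 2 <= Tr L P * Tr L Q.

Lemma sym_pow L P : P^T = P -> Tr L P = \tr (P ^+ (2 ^ L.+1)).
Proof. by move=> sP; rewrite /Tr sP -expr2 -exprM -expnS. Qed.

Lemma H_of_A L : Aprop L -> forall X Y, Tr L (X * Y) ^+ 2 <= Tr L.+1 X * Tr L.+1 Y.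
Proof.
move=> HA X Y.
have -> : Tr L (X * Y) = \tr ((X^T * X * (Y * Y^T)) ^+ (2 ^ L)).
  rewrite /Tr -mulmxE trmx_mul !mulmxE -mulrA tr_swapX; congr (\tr (_ ^+ _)).
  by rewrite !mulrA.
apply: le_trans (HA _ _) _.
rewrite sym_pow; last by rewrite -mulmxE trmx_mul trmxK.
rewrite sym_pow; last by rewrite -mulmxE trmx_mul trmxK.
by rewrite /Tr (tr_swapX Y Y^T).
Qed.

Lemma A_all L : Aprop L.
Proof.
elim: L => [|L IH] P Q.
  by rewrite /Tr !expn0 !expr1; apply: CS.
rewrite expnS exprM [(P * Q) ^+ 2]expr2.
apply: le_trans (IH _ _) _.
rewrite -expr2; exact: H_of_A.
Qed.

Lemma H_all L X Y : Tr L (X * Y) ^+ 2 <= Tr L.+1 X * Tr L.+1 Y.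
Proof. exact: H_of_A (A_all L) X Y. Qed.

Definition isq (k : nat) (x : R) := iter k Num.sqrt x.

Lemma isq_ge0 k x : 0 <= x -> 0 <= isq k x.
Proof. by case: k => [//|k] _; rewrite /isq iterS sqrtr_ge0. Qed.

Lemma isq_le k x y : x <= y -> isq k x <= isq k y.
Proof. by elim: k => [//|k IH] h; rewrite /isq !iterS; apply: ler_wsqrtr; apply: IH. Qed.

Lemma isqM k x y : 0 <= x -> 0 <= y -> isq k (x * y) = isq k x * isq k y.
Proof.
elim: k => [//|k IH] x0 y0; rewrite /isq !iterS -/(isq k _) IH // sqrtrM //.
exact: isq_ge0.
Qed.

Lemma isqS k x : isq k.+1 x = isq k (Num.sqrt x).
Proof. by rewrite /isq iterSr. Qed.

Lemma isqS' k x : isq k.+1 x = Num.sqrt (isq k x).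
Proof. by rewrite /isq iterS. Qed.

Definition N L X := isq L.+1 (Tr L X).

Lemma N_ge0 L X : 0 <= N L X.
Proof. exact/isq_ge0/Tr_ge0. Qed.

Lemma N_tr L X : N L X^T = N L X.
Proof. by rewrite /N Tr_tr. Qed.

Lemma Tr_sq L X : Tr L (X^T * X) = Tr L.+1 X.
Proof. by rewrite sym_pow ?(trmx_mul, trmxK) // -mulmxE trmx_mul trmxK. Qed.

Lemma N_sq L X : N L (X^T * X) = N L.+1 X ^+ 2.
Proof.
by rewrite /N Tr_sq [isq L.+2 _]isqS' sqr_sqrtr // isq_ge0 // Tr_ge0.
Qed.

Lemma N_mul L X Y : N L (X * Y) <= N L.+1 X * N L.+1 Y.
Proof.
rewrite /N ![isq L.+2 _]isqS' -sqrtrM ?isq_ge0 ?Tr_ge0 //.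
rewrite -isqM ?Tr_ge0 // -isqS' isqS.
rewrite isqS isqS; apply: isq_le; apply: ler_wsqrtr.
rewrite -(ger0_norm (Tr_ge0 L (X * Y))) -sqrtr_sqr.
apply: ler_wsqrtr; exact: H_all.
Qed.

Lemma N0_le_sq (x p : R) : 0 <= p -> x <= p ^+ 2 -> Num.sqrt x <= p.
Proof.
move=> p0 h; rewrite -(ger0_norm p0) -sqrtr_sqr; exact: ler_wsqrtr.
Qed.

Lemma N_triangle L A B : N L (A + B) <= N L A + N L B.
Proof.
elim: L A B => [|L IH] A B.
  rewrite /N /isq /= /Tr !expn0 !expr1.
  apply: N0_le_sq; first by rewrite addr_ge0 ?sqrtr_ge0.
  rewrite sqrrD !sqr_sqrtr ?tr_sq_ge0 //.
  rewrite raddfD /= -!mulmxE !mulmxDl !mulmxDr !mxtraceD !mulmxE.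
  have e : \tr (B^T * A) = \tr (A^T * B).
    by rewrite -mxtrace_tr -mulmxE trmx_mul trmxK mulmxE.
  rewrite e -!mulmxE.
  have h : \tr (A^T *m B) <= Num.sqrt (\tr (A^T *m A)) * Num.sqrt (\tr (B^T *m B)).
    rewrite -sqrtrM ?mulmxE ?tr_sq_ge0 //.
    apply: le_trans (ler_norm _) _; rewrite -sqrtr_sqr; apply: ler_wsqrtr.
    have := CS A^T B; rewrite trmxK -!mulmxE (mxtrace_mulC A A^T); exact.
  move: h; lra.
have hA := N_ge0 L.+1 A; have hB := N_ge0 L.+1 B.
rewrite -(ler_pXn2r (n := 2)) ?nnegrE ?N_ge0 ?addr_ge0 //.
rewrite -N_sq raddfD /= -!mulmxE !mulmxDl !mulmxDr !mulmxE.
apply: le_trans (IH _ _) _; rewrite addrC.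
apply: le_trans (lerD (IH _ _) (IH _ _)) _.
rewrite !N_sq.
have h1 := N_mul L A^T B; have h2 := N_mul L B^T A.
rewrite !N_tr in h1 h2.
rewrite sqrrD; lra.
Qed.

Definition ut (b : nat) A : 'M[R]_n :=
  \matrix_(i < n, j < n) (if (i + b <= j)%N then A i j else 0).

Lemma ut_key b A : (ut b A)^T * ut b A = ut 0 ((ut b A)^T * A) + (ut 1 ((ut b A)^T * A))^T.
Proof.
apply/matrixP => i k; rewrite -!mulmxE !mxE addn0.
case: (leqP i k) => ik.
  rewrite addn1 ltnNge ik /= addr0.
  apply: eq_bigr => l _; rewrite !mxE.
  case: (leqP (l + b) i) => lb; last by rewrite !mul0r.
  by rewrite (leq_trans lb ik).
rewrite addn1 ik /= add0r.
apply: eq_bigr => l _; rewrite !mxE.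
case: (leqP (l + b) k) => lb; last by rewrite mulr0 mul0r.
by rewrite (leq_trans lb (ltnW ik)) mulrC.
Qed.

Lemma tr_ut_le b A : \tr ((ut b A)^T * ut b A) <= \tr (A^T * A).
Proof.
rewrite !tr_sq; apply: ler_sum => i _; apply: ler_sum => j _; rewrite mxE.
by case: ifP => _ //; rewrite expr0n sqr_ge0.
Qed.

Theorem ut_bound L b A : N L (ut b A) <= 2 ^+ L * N L A.
Proof.
elim: L b A => [|L IH] b A.
  rewrite expr0 mul1r /N /isq /= /Tr !expn0 !expr1.
  exact/ler_wsqrtr/tr_ut_le.
set X := ut b A.
have hX := N_ge0 L.+1 X; have hA := N_ge0 L.+1 A.
have key : N L.+1 X ^+ 2 <= 2 ^+ L.+1 * N L.+1 X * N L.+1 A.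
  rewrite -N_sq /X ut_key; apply: le_trans (N_triangle _ _ _) _.
  rewrite N_tr.
  apply: le_trans (lerD (IH _ _) (IH _ _)) _.
  rewrite -mulr2n -mulrnAl -mulr_natl -exprS -mulrA ler_pM2l ?exprn_gt0 //.
  by have := N_mul L X^T A; rewrite N_tr.
have [X0|Xpos] := eqVneq (N L.+1 X) 0.
  by rewrite X0 mulr_ge0 // exprn_ge0.
have Xp : 0 < N L.+1 X by rewrite lt_def Xpos hX.
rewrite -(ler_pM2r Xp) -expr2; apply: le_trans key _; rewrite le_eqVlt; apply/orP; left; apply/eqP; ring.
Qed.

End TraceIneq.
End PA.

Module PB1.
Local Open Scope classical_set_scope.
Section Max.
Variable (R : realType).

Lemma cont_sum (T : topologicalType) (I : Type) (r : seq I) (f : I -> T -> R) :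
  (forall i, continuous (f i)) -> continuous (fun x => \sum_(i <- r) f i x).
Proof.
move=> fc; elim: r => [|a r IH].
  under eq_fun do rewrite big_nil; exact: cst_continuous.
under eq_fun do rewrite big_cons.
by move=> x; apply: continuousD; [exact: fc | exact: IH].
Qed.

Lemma max_sphere n (S : 'M[R]_n.+1) : exists v : 'rV[R]_n.+1,
  (v *m v^T) 0 0 = 1 /\
  forall w : 'rV[R]_n.+1, (w *m w^T) 0 0 = 1 -> (w *m S *m w^T) 0 0 <= (v *m S *m v^T) 0 0.
Proof.
set A := [set w : 'rV[R]_n.+1 | (w *m w^T) 0 0 = 1].
have nrm2 : forall w : 'rV[R]_n.+1, (w *m w^T) 0 0 = \sum_i w 0 i * w 0 i.
  by move=> w; rewrite mxE; apply: eq_bigr => i _; rewrite mxE.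
have qE : forall w : 'rV[R]_n.+1, (w *m S *m w^T) 0 0 = \sum_k \sum_i w 0 i * S i k * w 0 k.
  move=> w; rewrite mxE; apply: eq_bigr => k _; rewrite !mxE mulr_suml.
  by [] || (by apply: eq_bigr).

have cq : continuous (fun w : 'rV[R]_n.+1 => (w *m S *m w^T) 0 0).
  under eq_fun do rewrite qE.
  apply: cont_sum => k; apply: cont_sum => i x.
  apply: (continuousM (s := fun w : 'rV[R]_n.+1 => w 0 i * S i k) (t := fun w => w 0 k)); last exact: coord_continuous.
  apply: (continuousM (s := fun w : 'rV[R]_n.+1 => w 0 i) (t := fun w => S i k)); first exact: coord_continuous.
  exact: cst_continuous.
have cn : continuous (fun w : 'rV[R]_n.+1 => (w *m w^T) 0 0).
  under eq_fun do rewrite nrm2.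
  apply: cont_sum => i x.
  by apply: (continuousM (s := fun w : 'rV[R]_n.+1 => w 0 i) (t := fun w => w 0 i)); exact: coord_continuous.
have A0 : A !=set0.
  exists (delta_mx 0 0); rewrite /A /= nrm2 (bigD1 0) //= big1 ?mxE ?eqxx ?mulr1 ?addr0 //.
  by move=> i /negPf i0; rewrite mxE i0 mulr0.
have Acl : closed A.
  have -> : A = (fun w : 'rV[R]_n.+1 => (w *m w^T) 0 0) @^-1` [set 1] by [].
  apply: preimage_closed; last exact: closed_eq.
  by move=> x _; exact: cn.
have Abd : bounded_set A.
  exists 1; split; first by rewrite num_real.
  move=> x x1 w Aw.
  rewrite /Num.norm /= mx_normrE; apply: bigmax_le => [|[i j] _ /=]; first by apply: le_trans (ltW x1).
  rewrite ord1; apply: le_trans (ltW x1).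
  have : w 0 j * w 0 j <= 1.
    move: Aw; rewrite /A /= nrm2 => <-.
    rewrite (bigD1 j) //= lerDl; apply: sumr_ge0 => k _; by rewrite -expr2 sqr_ge0.
  rewrite -expr2 -real_normK ?num_real // => h.
  by rewrite -(ler_pXn2r (n := 2)) ?nnegrE // expr1n.
have [c cA cmax] := EVT_max_rV A0 (bounded_closed_compact Abd Acl) (continuous_subspaceT cq).
exists c; split; first by move: cA; rewrite inE.
by move=> w Aw; apply: cmax; rewrite inE.
Qed.

End Max.
End PB1.

Module PB2.
Section Dot.
Variable (R : rcfType).

Definition dot m (u w : 'rV[R]_m) := (u *m w^T) 0 0.

Lemma dotE m (u w : 'rV[R]_m) : dot u w = \sum_i u 0 i * w 0 i.
Proof. by rewrite /dot mxE; apply: eq_bigr => i _; rewrite mxE. Qed.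

Lemma dotC m (u w : 'rV[R]_m) : dot u w = dot w u.
Proof. by rewrite !dotE; apply: eq_bigr => i _; rewrite mulrC. Qed.

Lemma dotDl m (u v w : 'rV[R]_m) : dot (u + v) w = dot u w + dot v w.
Proof. by rewrite /dot mulmxDl mxE. Qed.

Lemma dotNl m (u w : 'rV[R]_m) : dot (- u) w = - dot u w.
Proof. by rewrite /dot mulNmx mxE. Qed.

Lemma dotBl m (u v w : 'rV[R]_m) : dot (u - v) w = dot u w - dot v w.
Proof. by rewrite dotDl dotNl. Qed.

Lemma dotZl m a (u w : 'rV[R]_m) : dot (a *: u) w = a * dot u w.
Proof. by rewrite /dot -scalemxAl mxE. Qed.

Lemma dotDr m (u v w : 'rV[R]_m) : dot w (u + v) = dot w u + dot w v.
Proof. by rewrite dotC dotDl !(dotC w). Qed.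

Lemma dotBr m (u v w : 'rV[R]_m) : dot w (u - v) = dot w u - dot w v.
Proof. by rewrite dotC dotBl !(dotC w). Qed.

Lemma dotZr m a (u w : 'rV[R]_m) : dot w (a *: u) = a * dot w u.
Proof. by rewrite dotC dotZl dotC. Qed.

Lemma dot_ge0 m (u : 'rV[R]_m) : 0 <= dot u u.
Proof. by rewrite dotE; apply: sumr_ge0 => i _; rewrite -expr2 sqr_ge0. Qed.

Lemma dot_eq0 m (u : 'rV[R]_m) : (dot u u == 0) = (u == 0).
Proof.
apply/idP/idP; last by move/eqP->; rewrite dotE big1 // => i _; rewrite mxE mul0r.
rewrite dotE psumr_eq0; last by move=> i _; rewrite -expr2 sqr_ge0.
move=> /allP h; apply/eqP/rowP => i; rewrite mxE.
by have := h i (mem_index_enum _); rewrite implyTb mulf_eq0 orbb => /eqP.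
Qed.

Lemma dot_mulmx m p (u : 'rV[R]_m) (A : 'M[R]_(m, p)) (w : 'rV[R]_p) :
  dot (u *m A) w = dot u (w *m A^T).
Proof. by rewrite /dot trmx_mul trmxK mulmxA. Qed.

Lemma rowdot m (u w : 'rV[R]_m) : u *m w^T = (dot u w)%:M.
Proof. by rewrite {1}[u *m w^T]mx11_scalar. Qed.

Definition qf m (S : 'M[R]_m) (z : 'rV[R]_m) := dot (z *m S) z.

Lemma quad2 (a b c : R) : 0 <= a -> (forall t, 0 <= a * t ^+ 2 - 2 * b * t + c) ->
  b ^+ 2 <= a * c.
Proof.
move=> a0 H; have [aE|an0] := eqVneq a 0.
  rewrite aE mul0r.
  have [->|bn0] := eqVneq b 0; first by rewrite expr0n.
  have := H ((c + 1) / (2 * b)).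
  have e : 2 * b * ((c + 1) / (2 * b)) = c + 1 by field; rewrite ?mulf_neq0 // ?pnatr_eq0.
  rewrite e aE mul0r; lra.
have ap : 0 < a by rewrite lt_def an0.
have := H (b / a).
have e : a * (b / a) ^+ 2 - 2 * b * (b / a) + c = c - b ^+ 2 / a by field.
rewrite e subr_ge0 ler_pdivrMr // mulrC //.
Qed.

Lemma qmax_all m (S : 'M[R]_m) (v : 'rV[R]_m) :
  (forall z, dot z z = 1 -> qf S z <= qf S v) ->
  forall z, qf S z <= qf S v * dot z z.
Proof.
move=> hmax z; have [->|zn0] := eqVneq z 0.
  by rewrite /qf mul0mx /dot mul0mx !mxE mulr0.
have cp : 0 < dot z z by rewrite lt_def dot_eq0 zn0 dot_ge0.
set c := dot z z in cp *.
have sc : 0 < Num.sqrt c by rewrite sqrtr_gt0.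
have sq : Num.sqrt c ^+ 2 = c by rewrite sqr_sqrtr // ltW.
set y := (Num.sqrt c)^-1 *: z.
have y1 : dot y y = 1.
  by rewrite /y dotZl dotZr mulrA -expr2 exprVn sq mulVf // gt_eqF.
have := hmax y y1.
rewrite /qf /y -scalemxAl dotZl dotZr mulrA -expr2 exprVn sq -/(qf S z) => h.
have ci : 0 < c^-1 by rewrite invr_gt0.
rewrite -(ler_pM2l ci).
have e : c^-1 * (qf S v * c) = qf S v by field; rewrite gt_eqF.
by rewrite e.
Qed.

Lemma eig_of_max m (S : 'M[R]_m) (v : 'rV[R]_m) : S^T = S -> dot v v = 1 ->
  (forall z, dot z z = 1 -> qf S z <= qf S v) -> v *m S = qf S v *: v.
Proof.
move=> sS v1 hmax; set l := qf S v.
have hall := qmax_all hmax.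
set g := v *m S - l *: v.
have sym : forall a b, dot (a *m S) b = dot a (b *m S).
  by move=> a b; rewrite dot_mulmx sS.
have vg : dot v g = 0.
  by rewrite /g dotBr dotZr v1 mulr1 -sym subrr.
have vSg : dot (v *m S) g = dot g g.
  have -> : dot g g = dot (v *m S - l *: v) g by [].
  by rewrite dotBl dotZl vg mulr0 subr0.
suff : dot g g = 0 by move/eqP; rewrite dot_eq0 subr_eq0 => /eqP.
set G := dot g g.
have G0 : 0 <= G by exact: dot_ge0.
have a0 : 0 <= l * G - qf S g by rewrite subr_ge0; exact: hall.
have : G ^+ 2 <= (l * G - qf S g) * 0.
  apply: quad2 => // t.
  have h := hall (v + t *: g).
  rewrite /qf mulmxDl -scalemxAl !dotDl !dotDr !dotZl !dotZr in h.
  rewrite -/(qf S v) -/l v1 vg (dotC g v) vg -/(qf S g) in h.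
  rewrite (sym g v) (dotC g (v *m S)) vSg -/G in h.
  rewrite -subr_ge0 in h; apply: le_trans h _; rewrite le_eqVlt; apply/orP; left; apply/eqP; ring.
rewrite mulr0 => h; apply/eqP; rewrite -(sqrf_eq0 G) eq_le h sqr_ge0 //.
Qed.

Definition e0 m : 'rV[R]_m.+1 := delta_mx 0 0.

Lemma dot_e0 m (u : 'rV[R]_m.+1) : dot (e0 m) u = u 0 0.
Proof.
rewrite dotE (bigD1 0) //= big1 ?addr0; first by rewrite mxE eqxx mul1r.
by move=> i /negPf i0; rewrite mxE i0 mul0r.
Qed.

Definition hh m (w : 'rV[R]_m.+1) : 'M[R]_m.+1 :=
  let d := e0 m - w in
  if d == 0 then 1%:M else 1%:M - (2 / dot d d) *: (d^T *m d).

Lemma hh_sym m (w : 'rV[R]_m.+1) : (hh w)^T = hh w.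
Proof.
rewrite /hh; case: ifP => _; first by rewrite trmx1.
by rewrite raddfB /= linearZ /= trmx1 trmx_mul trmxK.
Qed.

Lemma hh_orth m (w : 'rV[R]_m.+1) : hh w *m (hh w)^T = 1%:M.
Proof.
rewrite hh_sym /hh; case: ifP => [_|dn0]; first by rewrite mulmx1.
set d := e0 m - w; set c := dot d d; set k := 2 / c; set D := d^T *m d.
have cn0 : c != 0 by rewrite /c dot_eq0 dn0.
have DD : D *m D = c *: D.
  by rewrite /D mulmxA -(mulmxA d^T) rowdot mul_mx_scalar -scalemxAl.
rewrite mulmxBl !mulmxBr mul1mx mulmx1 mul1mx -scalemxAl -scalemxAr DD !scalerA.
have e : k * (k * c) = k + k by rewrite /k; field.
rewrite -mulrA e scalerDl; apply/matrixP => i j; rewrite !mxE; ring.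
Qed.

Lemma hh_row m (w : 'rV[R]_m.+1) : dot w w = 1 -> e0 m *m hh w = w.
Proof.
move=> w1; rewrite /hh; case: ifP => [/eqP|dn0].
  by move/eqP; rewrite subr_eq0 => /eqP <-; rewrite mulmx1.
set d := e0 m - w.
have cE : dot d d = 2 * d 0 0.
  rewrite /d dotBl !dotBr w1 !dot_e0 (dotC w) dot_e0 !mxE eqxx /=; ring.
have dn : d 0 0 != 0.
  by apply: contraFN dn0 => /eqP h; rewrite -dot_eq0 cE h mulr0.
rewrite mulmxBr mulmx1 -scalemxAr mulmxA rowdot dot_e0 mul_scalar_mx scalerA cE.
have -> : 2 / (2 * d 0 0) * d 0 0 = 1 by field; rewrite dn.
by rewrite scale1r /d opprB addrC subrK.
Qed.

Definition is_sv n (M : 'M[R]_n) (s : 'rV[R]_n) : Prop :=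
  (forall i : 'I_n, 0 <= s 0 i) /\
  (forall i j : 'I_n, (i <= j)%N -> s 0 j <= s 0 i) /\
  exists U V : 'M[R]_n,
    U *m U^T = 1%:M /\ V *m V^T = 1%:M /\ M = U *m diag_mx s *m V^T.

Lemma dot_orth m (A : 'M[R]_m) (y : 'rV[R]_m) : A *m A^T = 1%:M -> dot (y *m A) (y *m A) = dot y y.
Proof. by move=> h; rewrite dot_mulmx -mulmxA h mulmx1. Qed.

Lemma qf_S m (M : 'M[R]_m) z : qf (M^T *m M) z = dot (z *m M^T) (z *m M^T).
Proof. by rewrite /qf mulmxA dot_mulmx. Qed.

Lemma hh_invol m (w : 'rV[R]_m.+1) : hh w *m hh w = 1%:M.
Proof. by rewrite -{2}hh_sym hh_orth. Qed.

Lemma sv_zero n : is_sv (0 : 'M[R]_n) 0.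
Proof.
split; first by move=> i; rewrite mxE.
split; first by move=> i j _; rewrite !mxE.
exists 1%:M, 1%:M; rewrite trmx1 mulmx1; split => //; split => //.
by apply/matrixP => i j; rewrite mulmx1 mul1mx !mxE mul0rn.
Qed.

Lemma e0_mul m p (A : 'M[R]_(m.+1, p)) j : (e0 m *m A) 0 j = A 0 j.
Proof.
rewrite mxE (bigD1 0) //= big1 ?addr0; first by rewrite mxE eqxx mul1r.
by move=> k /negPf k0; rewrite mxE k0 mul0r.
Qed.

Lemma mul_e0T m p (A : 'M[R]_(p, m.+1)) i : (A *m (e0 m)^T) i 0 = A i 0.
Proof.
rewrite mxE (bigD1 0) //= big1 ?addr0; first by rewrite !mxE eqxx mulr1.
by move=> k /negPf k0; rewrite !mxE k0 mulr0.
Qed.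

Lemma dot_row m1 m2 (a c : 'rV[R]_m1) (b d : 'rV[R]_m2) :
  dot (row_mx a b) (row_mx c d) = dot a c + dot b d.
Proof. by rewrite /dot tr_row_mx mul_row_col mxE. Qed.

Lemma e0_diag m (d : 'rV[R]_m.+1) : e0 m *m diag_mx d = d 0 0 *: e0 m.
Proof.
apply/matrixP => i j; rewrite mul_mx_diag !mxE ord1.
by case H: (j == 0); [move/eqP: H => ->; rewrite /= mul1r mulr1 | rewrite andbF mul0r mulr0].
Qed.

Lemma dot0 m (a : 'rV[R]_m) : dot 0 a = 0.
Proof. by rewrite /dot mul0mx mxE. Qed.

Lemma delta_diag m (d : 'rV[R]_m) (k : 'I_m) : delta_mx 0 k *m diag_mx d = d 0 k *: (delta_mx 0 k : 'rV[R]_m).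
Proof.
apply/matrixP => i j; rewrite mul_mx_diag !mxE ord1 eqxx /=.
by case H: (j == k); [move/eqP: H => ->; rewrite mulr1 mul1r | rewrite mul0r mulr0].
Qed.

Lemma dot_delta m (k : 'I_m) : dot (delta_mx 0 k) (delta_mx 0 k) = 1.
Proof.
rewrite dotE (bigD1 k) //= big1 ?addr0; first by rewrite mxE !eqxx mulr1.
by move=> j /negPf jk; rewrite mxE jk andbF mul0r.
Qed.

Definition MaxProp := forall m (S : 'M[R]_m.+1), exists v, dot v v = 1 /\
  forall w, dot w w = 1 -> qf S w <= qf S v.

Lemma svd_step (MaxH : MaxProp) n (IH : forall B : 'M[R]_n, exists s, is_sv B s)
  (M : 'M[R]_(1 + n)) : exists s, is_sv M s.
Proof.
set S := M^T *m M.
have [v [v1 vmax]] := MaxH n S.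
set l := qf S v.
have hall := qmax_all vmax.
have l0 : 0 <= l by rewrite /l qf_S dot_ge0.
have [lz|lpos] := eqVneq l 0.
  suff -> : M = 0 by exists 0; exact: sv_zero.
  apply/matrixP => i j; rewrite mxE.
  have := hall (delta_mx 0 j); rewrite -/l lz mul0r qf_S.
  have := dot_ge0 (delta_mx 0 j *m M^T) => h1 h2.
  have /eqP : dot (delta_mx 0 j *m M^T) (delta_mx 0 j *m M^T) = 0 by apply/eqP; rewrite eq_le h1 h2.
  rewrite dot_eq0 => /eqP /matrixP /(_ 0 i); rewrite mxE (bigD1 j) //= big1 ?addr0.
    by rewrite !mxE !eqxx mul1r.
  by move=> k /negPf kj; rewrite mxE kj andbF mul0r.
have lp : 0 < l by rewrite lt_def lpos l0.
set sg := Num.sqrt l.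
have sgp : 0 < sg by rewrite sqrtr_gt0.
have sg2 : sg ^+ 2 = l by rewrite sqr_sqrtr // ltW.
set x := v *m M^T.
have x1 : dot x x = l by rewrite /l qf_S.
set u := sg^-1 *: x.
have u1 : dot u u = 1.
  by rewrite /u dotZl dotZr x1 -sg2 mulrA -expr2 exprVn mulVf // expf_neq0 // gt_eqF.
have sS : S^T = S by rewrite /S trmx_mul trmxK.
have eig : v *m S = l *: v := eig_of_max sS v1 vmax.
set P := hh v; set Q := hh u.
have PP : P *m P = 1%:M by exact: hh_invol.
have QQ : Q *m Q = 1%:M by exact: hh_invol.
have PT : P^T = P by exact: hh_sym.
have QT : Q^T = Q by exact: hh_sym.
have eP : e0 n *m P = v by exact: hh_row.
have eQ : e0 n *m Q = u by exact: hh_row.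
set B := Q *m M *m P.
have MB : M = Q *m B *m P by rewrite /B !mulmxA QQ mul1mx -mulmxA PP mulmx1.
have rowB : e0 n *m B = sg *: e0 n.
  rewrite /B !mulmxA eQ /u -!scalemxAl /x -(mulmxA v) -/S eig -scalemxAl -eP.
  rewrite -mulmxA PP mulmx1 scalerA -sg2 expr2 mulKf // gt_eqF //.
have colB : B *m (e0 n)^T = sg *: (e0 n)^T.
  rewrite /B -mulmxA -PT -trmx_mul eP -mulmxA -(trmxK M) -trmx_mul -/x.
  have -> : x = sg *: u by rewrite /u scalerA mulfV ?gt_eqF // scale1r.
  by rewrite linearZ /= -scalemxAr -eQ -QT -trmx_mul -mulmxA QT QQ mulmx1.
have B00 : forall j, B 0 j = sg * (e0 n) 0 j.
  by move=> j; rewrite -(e0_mul B) rowB mxE.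
have Bi0 : forall i, B i 0 = sg * (e0 n) 0 i.
  by move=> i; rewrite -(mul_e0T B) colB !mxE.
clearbody B.
set B' := drsubmx (B : 'M[R]_(1 + n)).
have BE : (B : 'M[R]_(1 + n)) = block_mx (sg%:M : 'M[R]_1) 0 0 B'.
  rewrite -[LHS](@submxK _ 1 n 1 n B); congr block_mx; apply/matrixP => i j; rewrite !mxE !ord1.
  - have -> : lshift n (0 : 'I_1) = 0 by apply/val_inj.
    by rewrite B00 mxE eqxx mulr1.
  - have -> : lshift n (0 : 'I_1) = 0 by apply/val_inj.
    by rewrite B00 mxE /= mulr0.
  - have -> : lshift n (0 : 'I_1) = 0 by apply/val_inj.
    by rewrite Bi0 mxE /= mulr0.
have [s' [s'0 [s'ord [U' [V' [U'o [V'o B'E]]]]]]] := IH B'.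
exists (row_mx (sg%:M : 'rV_1) s').
have blko : forall W : 'M[R]_n, W *m W^T = 1%:M ->
    (block_mx (1%:M : 'M[R]_1) 0 0 W) *m (block_mx (1%:M : 'M[R]_1) 0 0 W)^T = 1%:M.
  move=> W hW; rewrite tr_block_mx !trmx0 trmx1 mulmx_block hW.
  by rewrite !mulmx0 !mul0mx !addr0 !add0r mulmx1 -scalar_mx_block.
split; last split; last first.
  exists (Q *m block_mx (1%:M : 'M[R]_1) 0 0 U'), (P *m block_mx (1%:M : 'M[R]_1) 0 0 V').
  split; first by rewrite trmx_mul mulmxA -(mulmxA Q) blko // mulmx1; exact: hh_orth.
  split; first by rewrite trmx_mul mulmxA -(mulmxA P) blko // mulmx1; exact: hh_orth.
  rewrite MB BE diag_mx_row trmx_mul PT !mulmxA; congr (_ *m _).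
  rewrite -!mulmxA; congr (_ *m _).
  rewrite (@tr_block_mx _ 1 n 1 n) !trmx0 trmx1 (@mulmx_block _ 1 n 1 n 1 n) (@mulmx_block _ 1 n 1 n 1 n).
  rewrite !mulmx0 !mul0mx !addr0 !add0r !mulmx1 !mul1mx B'E.
  have -> : diag_mx (sg%:M : 'rV_1) = sg%:M by apply/matrixP => i j; rewrite !mxE !ord1.
  by rewrite mulmx0 mulmxA.
2: { move=> i; rewrite mxE; case: splitP => [i' _|i' _]; last exact: s'0.
  by rewrite mxE ord1 /= mulr1n ltW. }
have V'TV' : V'^T *m V' = 1%:M by apply: mulmx1C.
have U'TU' : U'^T *m U' = 1%:M by apply: mulmx1C.
have bound : forall k : 'I_n, s' 0 k <= sg.
  move=> k; pose ek := delta_mx 0 k : 'rV[R]_n; pose w' := ek *m V'^T.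
  have w1 : dot w' w' = 1 by rewrite dot_orth ?trmxK // dot_delta.
  pose z := row_mx (0 : 'rV[R]_1) w' *m P.
  have dz : dot z z = 1.
    rewrite /z dot_orth; last exact: hh_orth.
    by rewrite (@dot_row 1 n) dot0 add0r.
  have := hall z; rewrite dz mulr1 qf_S.
  have PM : P *m M^T = B^T *m Q by rewrite MB !trmx_mul PT QT !mulmxA PP mul1mx.
  rewrite /z -mulmxA PM mulmxA dot_orth ?hh_orth //.
  rewrite BE (@tr_block_mx _ 1 n 1 n) !trmx0 (@mul_row_block _ 1 1 n 1 n) !mul0mx !mulmx0 !addr0 add0r.
  rewrite (@dot_row 1 n) dot0 add0r B'E !trmx_mul trmxK tr_diag_mx /w' !mulmxA.
  rewrite -(mulmxA ek) V'TV' mulmx1 delta_diag -scalemxAl dotZl dotZr.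
    rewrite -/l dot_orth ?trmxK // dot_delta mulr1 -expr2 -sg2 => h.
  by rewrite -(ler_pXn2r (n := 2)) ?nnegrE ?(ltW sgp).
move=> i j ij; rewrite !mxE.
case: splitP => [j' hj|j' hj]; case: splitP => [i' hi|i' hi].
- by rewrite !mxE !ord1.
- by exfalso; move: ij (ltn_ord j'); rewrite hi hj /=; case: (nat_of_ord j') => // ? ?; rewrite ltnS.
- by rewrite mxE ord1 /= mulr1n bound.
- apply: s'ord; move: ij; rewrite hi hj; by rewrite leq_add2l.
Qed.


Lemma svd_ex (MaxH : MaxProp) n (M : 'M[R]_n) : exists s, is_sv M s.
Proof.
elim: n M => [|n IH] M.
  exists 0; split; first by case.
  split; first by case.
  exists 1%:M, 1%:M; split; first by rewrite trmx1 mulmx1.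
  split; first by rewrite trmx1 mulmx1.
  by apply/matrixP => [[]].
exact: (svd_step MaxH IH M).
Qed.

End Dot.
End PB2.

Import PA PB1 PB2.

Section Glue.
Variable R : realType.

Lemma diag_pow n (d : 'rV[R]_n) k : (diag_mx d) ^+ k = diag_mx (\row_j d 0 j ^+ k).
Proof.
elim: k => [|k IH].
  by apply/matrixP => i j; rewrite expr0 !mxE expr0.
rewrite exprS IH -mulmxE mulmx_diag; congr diag_mx; apply/rowP => j.
by rewrite !mxE exprS.
Qed.

Lemma conj_pow n (V Z : 'M[R]_n) k : V *m V^T = 1%:M -> V^T *m V = 1%:M ->
  (V *m Z *m V^T) ^+ k = V *m Z ^+ k *m V^T.
Proof.
move=> h1 h2; elim: k => [|k IH]; first by rewrite !expr0 mulmx1 h1.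
rewrite exprS IH -!mulmxE !mulmxA -(mulmxA _ V^T V) h2 mulmx1 exprS -mulmxE !mulmxA.
by [].
Qed.

Lemma Tr_sv L n (M : 'M[R]_n) s : is_sv M s -> Tr L M = \sum_i s 0 i ^+ (2 ^ L.+1).
Proof.
move=> [_ [_ [U [V [hU [hV ->]]]]]].
have hU' : U^T *m U = 1%:M by apply: mulmx1C.
have hV' : V^T *m V = 1%:M by apply: mulmx1C.
rewrite /Tr !trmx_mul trmxK tr_diag_mx -!mulmxE.
have -> : V *m (diag_mx s *m U^T) *m (U *m diag_mx s *m V^T) = V *m (diag_mx s *m diag_mx s) *m V^T.
  by rewrite !mulmxA -(mulmxA _ U^T U) hU' mulmx1 -!mulmxA.
rewrite conj_pow // -mulmxA mxtrace_mulC -mulmxA hV' mulmx1.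
rewrite mulmxE -expr2 -exprM -expnS diag_pow mxtrace_diag.
by apply: eq_bigr => i _; rewrite mxE.
Qed.

Lemma powR_isq k (x : R) : 0 <= x -> powR x ((2 ^ k)%:R)^-1 = isq k x.
Proof.
move=> x0; elim: k => [|k IH]; first by rewrite expn0 invr1 powRr1.
rewrite isqS' -IH expnS natrM invfM mulrC powRrM powR12_sqrt //.
exact: powR_ge0.
Qed.

Lemma MaxH : MaxProp R.
Proof. move=> m S; exact: max_sphere. Qed.

Lemma schatten_N L n (M : 'M[R]_n) : schatten (2 ^ L.+1)%:R M = N L M.
Proof.
have hs : is_sv M (singvals M).
  have [s hs] := svd_ex MaxH M.
  exact: (@xgetPex _ 0 [set s | is_singvals M s] (ex_intro _ s hs)).
have s0 := hs.1.
rewrite /schatten /N.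
rewrite (eq_bigr (fun i => singvals M 0 i ^+ (2 ^ L.+1))); last first.
  by move=> i _; rewrite powR_mulrn.
by rewrite -(Tr_sv L hs) powR_isq // Tr_ge0.
Qed.

End Glue.

Theorem mainTheorem5 (R : realType) (j n : nat) (hj : (1 <= j)%N) (M : 'M[R]_n) :
  schatten (2 ^ j)%:R (utrunc M) <= 2 ^+ (j - 1) * schatten (2 ^ j)%:R M.
Proof.
case: j hj => // L _; rewrite subn1 /= !schatten_N.
have -> : utrunc M = ut 0 M.
  by apply/matrixP => i k; rewrite !mxE addn0.
exact: ut_bound.
Qed.
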